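(* Consider a channel network whose links are divided into computational cells. For a cell $k$ of length $\Delta x_k>0$ with interior interfaces $x_{k-1/2}$ (left) and $x_{k+1/2}$ (right), let $\bar A_k^n\ge 0$ be the cell-averaged wetted area at time level $n$. At each interface $x_{j+1/2}$ let there be given reconstructed one-sided areas $A^{\pm}_{j+1/2}\ge 0$, velocities $u^{\pm}_{j+1/2}\in\mathbb R$, celerities $c^{\pm}_{j+1/2}\ge 0$, discharges $Q^{\pm}_{j+1/2}=A^{\pm}_{j+1/2}u^{\pm}_{j+1/2}$, and one-sided speeds $$a^+_{j+1/2}=\max\{0,\,u^+_{j+1/2}+c^+_{j+1/2},\,u^-_{j+1/2}+c^-_{j+1/2}\},\qquad a^-_{j+1/2}=\min\{0,\,u^+_{j+1/2}-c^+_{j+1/2},\,u^-_{j+1/2}-c^-_{j+1/2}\},$$ and assume $a^+_{j+1/2}-a^-_{j+1/2}>0$. Define the mass flux $$H^{(1)}_{j+1/2}=\frac{a^+_{j+1/2}Q^-_{j+1/2}-a^-_{j+1/2}Q^+_{j+1/2}}{a^+_{j+1/2}-a^-_{j+1/2}}+\frac{a^+_{j+1/2}a^-_{j+1/2}}{a^+_{j+1/2}-a^-_{j+1/2}}\big(A^+_{j+1/2}-A^-_{j+1/2}\big).$$ (i) (Interior cells.) Let $\bar A_k^{n+1}=\bar A_k^n-\frac{\Delta t}{\Delta x_k}\big(H^{(1)}_{k+1/2}-H^{(1)}_{k-1/2}\big)$. If $\Delta t>0$ satisfies $$\Delta t\le \Delta t_k:=\min\Big\{\frac{\Delta x_k}{a^+_{k-1/2}-a^-_{k+1/2}},\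 \frac{\Delta x_k\,\bar A_k^n}{a^+_{k+1/2}A^-_{k+1/2}-a^-_{k-1/2}A^+_{k-1/2}}\Big\}$$ (where a quotient with nonpositive denominator is interpreted as $+\infty$), then $\bar A_k^{n+1}\ge 0$. (ii) (Junction nodes.) Let a node $s$ have a set $J_{s,in}$ of inflowing links, each $i$ ending at the node with last interface $x_{i,n_i+1/2}$, and a set $J_{s,out}$ of outflowing links, each $j$ starting at the node with first interface $x_{j,1/2}$. Let the node control volume consist of pieces of lengths $\Delta x^{in}_{s,i}>0$, $\Delta x^{out}_{s,j}>0$ with average areas $\bar A^{in,n}_{s,i}\ge0$, $\bar A^{out,n}_{s,j}\ge0$, and define the total volumes $V^n_s=\sum_{i\in J_{s,in}}\Delta x^{in}_{s,i}\bar A^{in,n}_{s,i}+\sum_{j\in J_{s,out}}\Delta x^{out}_{s,j}\bar A^{out,n}_{s,j}$ and $$V_s^{n+1}=V_s^n+\Delta t\sum_{i\in J_{s,in}}H^{(1)}_{i,n_i+1/2}-\Delta t\sum_{j\in J_{s,out}}H^{(1)}_{j,1/2}.$$ If $$\Delta t\le\Delta t_s:=\min\Big\{\min_{i\in J_{s,in}}\Big[\frac{\Delta x^{in}_{s,i}}{a^+_{i,n_i+1/2}},\ \frac{-\Delta x^{in}_{s,i}\bar A^{in,n}_{s,i}}{a^-_{i,n_i+1/2}A^+_{i,n_i+1/2}}\Big],\ \min_{j\in J_{s,out}}\Big[\frac{-\Delta x^{out}_{s,j}}{a^-_{j,1/2}},\ \frac{\Delta x^{out}_{s,j}\bar A^{out,n}_{s,j}}{a^+_{j,1/2}A^-_{j,1/2}}\Big]\Big\}$$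 (with quotients having zero denominator interpreted as $+\infty$), then $V_s^{n+1}\ge 0$. Consequently, if $\Delta t\le\min\{\min_{k}\Delta t_k,\min_s\Delta t_s\}$, all updated cell areas and node volumes are nonnegative.
   Context: This is the mass-conservation part of a first-order-in-time (forward Euler) central-upwind finite-volume scheme for the one-dimensional Saint Venant equations $A_t+Q_x=0$, $Q_t+(Q^2/A+gI_1)_x=\dots$ on a channel network, where $A$ is the wetted cross-sectional area, $Q=Au$ the discharge, and $c=\sqrt{gA/\sigma_T}$ the celerity ($\sigma_T$ the free-surface width). The momentum update (with implicit treatment of friction) does not affect the area update. *)

(* Defs.v *)
From Stdlib Require Import Reals Lra List.
Open Scope R_scope.

(* Reconstructed one-sided data at one interface x_{j+1/2}:
   A^-, A^+ (areas), u^-, u^+ (velocities), c^-, c^+ (celerities). *)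
Record iface := mkIface {
  Am : R; Ap : R;
  um : R; up : R;
  cm : R; cp : R }.

Definition Qm (f : iface) : R := Am f * um f.
Definition Qp (f : iface) : R := Ap f * up f.

Definition aplus (f : iface) : R :=
  Rmax 0 (Rmax (up f + cp f) (um f + cm f)).
Definition aminus (f : iface) : R :=
  Rmin 0 (Rmin (up f - cp f) (um f - cm f)).

Definition iface_ok (f : iface) : Prop :=
  0 <= Am f /\ 0 <= Ap f /\ 0 <= cm f /\ 0 <= cp f /\
  aplus f - aminus f > 0.

Definition H1 (f : iface) : R :=
  (aplus f * Qm f - aminus f * Qp f) / (aplus f - aminus f)
  + (aplus f * aminus f) / (aplus f - aminus f) * (Ap f - Am f).

(* "dt <= num/den", where a quotient with nonpositive denominator is +infinity *)
Definition le_quot_pos (dt num den : R) : Prop := 0 < den -> dt <= num / den.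

(* "dt <= num/den", where a quotient with zero denominator is +infinity *)
Definition le_quot_nz (dt num den : R) : Prop := den <> 0 -> dt <= num / den.

Definition cell_update (dt dx Abar : R) (fL fR : iface) : R :=
  Abar - dt / dx * (H1 fR - H1 fL).

(* A piece of a node control volume attached to one link:
   length dx, average area Abar, and the link interface at the node
   (last interface x_{i,n_i+1/2} for inflowing links,
    first interface x_{j,1/2} for outflowing links). *)
Record piece := mkPiece { pdx : R; pA : R; pf : iface }.

Definition sumR (l : list R) : R := fold_right Rplus 0 l.

Definition node_volume (ins outs : list piece) : R :=
  sumR (map (fun p => pdx p * pA p) ins) + sumR (map (fun p => pdx p * pA p) outs).

Definition node_update (dt : R) (ins outs : list piece) : R :=
  node_volume ins outs + dt * sumR (map (fun p => H1 (pf p)) ins)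
                       - dt * sumR (map (fun p => H1 (pf p)) outs).

(* Time-step restriction at a node, in the "for all terms of the min" form *)
Definition node_cfl (dt : R) (ins outs : list piece) : Prop :=
  (forall p, In p ins ->
     le_quot_nz dt (pdx p) (aplus (pf p)) /\
     le_quot_nz dt (- (pdx p * pA p)) (aminus (pf p) * Ap (pf p))) /\
  (forall p, In p outs ->
     le_quot_nz dt (- pdx p) (aminus (pf p)) /\
     le_quot_nz dt (pdx p * pA p) (aplus (pf p) * Am (pf p))).

Definition piece_ok (p : piece) : Prop :=
  0 < pdx p /\ 0 <= pA p /\ iface_ok (pf p).

(* Main.v *)
Require Import Defs.
From Stdlib Require Import Reals List Lra.
Open Scope R_scope.

Lemma speeds f : iface_ok f ->
  0 <= aplus f /\ aminus f <= 0 /\ um f <= aplus f /\ Defs.up f <= aplus f /\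
  aminus f <= um f /\ aminus f <= Defs.up f.
Proof.
  intros (h1&h2&h3&h4&h5). unfold aplus, aminus in *.
  repeat match goal with |- context [Rmax ?a ?b] => destruct (Rmax_spec_le a b) as [? | ?]; ( pose proof (Rmax_l a b); pose proof (Rmax_r a b)) end.
  all: pose proof (Rmin_l (Defs.up f - cp f) (um f - cm f)); pose proof (Rmin_r (Defs.up f - cp f) (um f - cm f));
       pose proof (Rmin_l 0 (Rmin (Defs.up f - cp f) (um f - cm f))); pose proof (Rmin_r 0 (Rmin (Defs.up f - cp f) (um f - cm f)));
       pose proof (Rmax_l (Defs.up f + cp f) (um f + cm f)); pose proof (Rmax_r (Defs.up f + cp f) (um f + cm f));
       pose proof (Rmax_l 0 (Rmax (Defs.up f + cp f) (um f + cm f))); pose proof (Rmax_r 0 (Rmax (Defs.up f + cp f) (um f + cm f))).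
  all: lra.
Qed.

Lemma H1_form f : iface_ok f ->
  H1 f = (aplus f * Am f * (um f - aminus f) + aminus f * Ap f * (aplus f - Defs.up f)) / (aplus f - aminus f).
Proof.
  intros h. pose proof h as (_&_&_&_&h5). unfold H1, Qm, Qp. field. lra.
Qed.

Lemma H1_up f : iface_ok f -> H1 f <= aplus f * Am f.
Proof.
  intros h. rewrite H1_form by exact h. pose proof (speeds f h) as (s1&s2&s3&s4&s5&s6).
  pose proof h as (h1&h2&_&_&h5).
  apply Rmult_le_reg_r with (aplus f - aminus f); [lra|].
  unfold Rdiv. rewrite Rmult_assoc, Rinv_l by lra. rewrite Rmult_1_r.
  assert (0 <= aplus f * Am f * (aplus f - um f)) by (apply Rmult_le_pos; [apply Rmult_le_pos|]; lra).
  assert (0 <= - aminus f * Ap f * (aplus f - Defs.up f)) by (apply Rmult_le_pos; [apply Rmult_le_pos|]; lra).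
  nra.
Qed.

Lemma H1_lo f : iface_ok f -> aminus f * Ap f <= H1 f.
Proof.
  intros h. rewrite H1_form by exact h. pose proof (speeds f h) as (s1&s2&s3&s4&s5&s6).
  pose proof h as (h1&h2&_&_&h5).
  apply Rmult_le_reg_r with (aplus f - aminus f); [lra|].
  match goal with |- _ <= ?X / ?d * _ => replace (X / d * d) with X by (field; lra) end.
  assert (0 <= aplus f * Am f * (um f - aminus f)) by (apply Rmult_le_pos; [apply Rmult_le_pos|]; lra).
  assert (0 <= - aminus f * Ap f * (Defs.up f - aminus f)) by (apply Rmult_le_pos; [apply Rmult_le_pos|]; lra).
  nra.
Qed.

Lemma step_nonneg (dt V x : R) : 0 < dt -> 0 <= V -> (x <> 0 -> dt <= V / x) -> x >= 0 -> 0 <= V - dt * x.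
Proof.
  intros hd hV hq hx. destruct (Req_dec x 0) as [->|nz]; [lra|].
  specialize (hq nz). assert (x > 0) by lra.
  apply Rmult_le_compat_r with (r := x) in hq; [|lra].
  unfold Rdiv in hq. rewrite Rmult_assoc, Rinv_l in hq by lra. lra.
Qed.

Lemma sum_ins dt (l : list piece) :
  0 < dt -> (forall p, In p l -> piece_ok p) ->
  (forall p, In p l -> le_quot_nz dt (- (pdx p * pA p)) (aminus (pf p) * Ap (pf p))) ->
  0 <= sumR (map (fun p => pdx p * pA p) l) + dt * sumR (map (fun p => H1 (pf p)) l).
Proof.
  intros hd; induction l as [|p l IH]; intros hok hq; simpl; [lra|].
  assert (hp : piece_ok p) by (apply hok; left; auto).
  destruct hp as (h1&h2&h3).
  assert (IH' := IH (fun q hq' => hok q (or_intror hq')) (fun q hq' => hq q (or_intror hq'))).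
  pose proof (H1_lo _ h3). pose proof (speeds _ h3) as (_&s2&_).
  destruct h3 as (_&a2&_).
  assert (0 <= pdx p * pA p - dt * (- (aminus (pf p) * Ap (pf p)))).
  { apply step_nonneg; auto. apply Rmult_le_pos; lra.
    intros nz. specialize (hq p (or_introl eq_refl)).
    assert (e: aminus (pf p) * Ap (pf p) <> 0) by lra. specialize (hq e).
    match goal with |- dt <= ?V / ?x => replace (V / x) with (- V / (aminus (pf p) * Ap (pf p))) by (unfold Rdiv; rewrite Rinv_opp; ring) end.
    exact hq. nra. }
  nra.
Qed.

Lemma sum_outs dt (l : list piece) :
  0 < dt -> (forall p, In p l -> piece_ok p) ->
  (forall p, In p l -> le_quot_nz dt (pdx p * pA p) (aplus (pf p) * Am (pf p))) ->
  0 <= sumR (map (fun p => pdx p * pA p) l) - dt * sumR (map (fun p => H1 (pf p)) l).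
Proof.
  intros hd; induction l as [|p l IH]; intros hok hq; simpl; [lra|].
  assert (hp : piece_ok p) by (apply hok; left; auto).
  destruct hp as (h1&h2&h3).
  assert (IH' := IH (fun q hq' => hok q (or_intror hq')) (fun q hq' => hq q (or_intror hq'))).
  pose proof (H1_up _ h3). pose proof (speeds _ h3) as (s1&_).
  destruct h3 as (a1&_).
  assert (0 <= pdx p * pA p - dt * (aplus (pf p) * Am (pf p))).
  { apply step_nonneg; auto. apply Rmult_le_pos; lra.
    apply hq; left; auto. nra. }
  nra.
Qed.

Theorem theorem1 :
  (* (i) interior cells *)
  (forall (dt dx Abar : R) (fL fR : iface),
     0 < dx -> 0 <= Abar -> iface_ok fL -> iface_ok fR -> 0 < dt ->
     le_quot_pos dt dx (aplus fL - aminus fR) ->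
     le_quot_pos dt (dx * Abar) (aplus fR * Am fR - aminus fL * Ap fL) ->
     0 <= cell_update dt dx Abar fL fR)
  /\
  (* (ii) junction nodes *)
  (forall (dt : R) (ins outs : list piece),
     0 < dt ->
     (forall p, In p ins -> piece_ok p) ->
     (forall p, In p outs -> piece_ok p) ->
     node_cfl dt ins outs ->
     0 <= node_update dt ins outs).
Proof.
  split.
  - intros dt dx Abar fL fR hdx hA hL hR hdt _ hq. unfold cell_update.
    pose proof (H1_up _ hR). pose proof (H1_lo _ hL).
    set (D := aplus fR * Am fR - aminus fL * Ap fL) in *.
    assert (hle : H1 fR - H1 fL <= D) by (unfold D; lra).
    assert (hlam : 0 < dt / dx) by (apply Rdiv_lt_0_compat; lra).
    destruct (Rle_lt_dec D 0) as [hD|hD].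
    + assert (dt / dx * (H1 fR - H1 fL) <= 0) by nra. lra.
    + specialize (hq hD).
      assert (hDA : dt * D <= dx * Abar).
      { apply Rmult_le_compat_r with (r := D) in hq; [|lra].
        unfold Rdiv in hq. rewrite Rmult_assoc, Rinv_l in hq by lra. lra. }
      assert (hh : dt / dx * (H1 fR - H1 fL) <= dt / dx * D) by (apply Rmult_le_compat_l; lra).
      assert (hh2 : dt / dx * D <= Abar).
      { unfold Rdiv. apply Rmult_le_reg_l with dx; [lra|].
        replace (dx * (dt * / dx * D)) with (dt * D) by (field; lra). lra. }
      lra.
  - intros dt ins outs hdt hi ho [ci co]. unfold node_update, node_volume.
    pose proof (sum_ins dt ins hdt hi (fun p h => proj2 (ci p h))).
    pose proof (sum_outs dt outs hdt ho (fun p h => proj2 (co p h))).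
    lra.
Qed.
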